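(* Let $\mathcal I$ be an ideal on $\omega$, let $X$ be a topological space with $X=\bigcup\{X_\alpha:\alpha<\kappa\}$ for a cardinal $\kappa$, and let $(f_n)$ be a sequence in $\mathcal C(X)$. (1) If $\kappa<\mathfrak b_s(\mathcal I)$ and $(f_n\restriction X_\alpha)$ is $\mathcal I$-quasi-normally convergent to $0$ for every $\alpha<\kappa$, then $(f_n)$ is $\mathcal I$-quasi-normally convergent to $0$. (2) If $\kappa<\mathfrak b_\sigma(\mathcal I)$ and $(f_n\restriction X_\alpha)$ is $\mathcal I$-$\sigma$-uniformly convergent to $0$ for every $\alpha<\kappa$, then $(f_n)$ is $\mathcal I$-$\sigma$-uniformly convergent to $0$.
   Context: An ideal on $\omega$ is a family $\mathcal I\subseteq\mathcal P(\omega)$ closed under finite unions and subsets, containing all finite sets, with $\omega\notin\mathcal I$. A real sequence $(a_n)$ is $\mathcal I$-convergent to $0$ if $\{n:|a_n|\ge\varepsilon\}\in\mathcal I$ for all $\varepsilon>0$. For a sequence $(f_n)$ of real functions on a set $Y$: $\mathcal I$-uniform convergence to $0$ means $\{n:\exists x\in Y\,(|f_n(x)|\ge\varepsilon)\}\in\mathcal I$ for each $\varepsilon>0$; $\mathcal I$-$\sigma$-uniform means $Y=\bigcup_{k\in\omega}Y_k$ with $(f_n\restriction Y_k)$ $\mathcal I$-uniformly convergent to $0$ for each $k$; $\mathcal I$-quasi-normal means there is a sequence $(\varepsilon_n)$ of positive reals $\mathcal I$-convergent to $0$ with $\{n:|f_n(x)|\ge\varepsilon_n\}\in\mathcal I$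 for each $x\in Y$. $\mathcal C(X)$ = continuous real functions on $X$. Cardinals (convention $\min\emptyset=\infty$, $\kappa<\infty$ for all cardinals): $\widehat{\mathcal P}_{\mathcal I}$ = sequences $(A_n)\in\mathcal I^\omega$ of pairwise disjoint sets; $\mathcal P_{\mathcal I}$ = those with $\bigcup_nA_n=\omega$; $\mathcal M_{\mathcal I}$ = sequences $(E_k)\in\mathcal I^\omega$ with $E_k\subseteq E_{k+1}$. $\mathfrak b_s(\mathcal I)=\min\{|\mathcal E|:\mathcal E\subseteq\widehat{\mathcal P}_{\mathcal I}$ and for every $(A_n)\in\mathcal P_{\mathcal I}$ there is $(E_n)\in\mathcal E$ with $\bigcup_n(A_{n+1}\cap\bigcup_{i\le n}E_i)\notin\mathcal I\}$; $\mathfrak b_\sigma(\mathcal I)=\min\{|\mathcal E|:\mathcal E\subseteq\mathcal M_{\mathcal I}$ and for every $(A_n)\in\mathcal M_{\mathcal I}$ there is $(E_n)\in\mathcal E$ with $E_n\not\subseteq A_n$ for infinitely many $n\}$. *)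

(* Defs.v *)
From HB Require Import structures.
From mathcomp Require Import all_boot all_order all_algebra.
From mathcomp Require Import all_classical all_reals all_analysis.
Set Implicit Arguments. Unset Strict Implicit. Unset Printing Implicit Defensive.
Import Order.TTheory GRing.Theory Num.Theory numFieldNormedType.Exports.
Local Open Scope classical_set_scope.
Local Open Scope ring_scope.

Definition is_ideal (I : set (set nat)) : Prop :=
  (forall A B, I A -> I B -> I (A `|` B)) /\
  (forall A B, B `<=` A -> I A -> I B) /\
  (forall A, finite_set A -> I A) /\
  ~ I setT.

Definition Iconv0 {R : realType} (I : set (set nat)) (a : nat -> R) : Prop :=
  forall e : R, 0 < e -> I [set n | e <= `|a n|].

Definition Iuniform {X : Type} {R : realType} (I : set (set nat))
  (f : nat -> X -> R) (Y : set X) : Prop :=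
  forall e : R, 0 < e -> I [set n | exists2 x, Y x & e <= `|f n x|].

Definition Isigma_uniform {X : Type} {R : realType} (I : set (set nat))
  (f : nat -> X -> R) (Y : set X) : Prop :=
  exists Yk : nat -> set X, Y = \bigcup_k Yk k /\ forall k, Iuniform I f (Yk k).

Definition Iquasi_normal {X : Type} {R : realType} (I : set (set nat))
  (f : nat -> X -> R) (Y : set X) : Prop :=
  exists eps : nat -> R, (forall n, 0 < eps n) /\ Iconv0 I eps /\
    forall x, Y x -> I [set n | eps n <= `|f n x|].

Definition Phat (I : set (set nat)) (A : nat -> set nat) : Prop :=
  (forall n, I (A n)) /\ (forall n m, n <> m -> A n `&` A m = set0).
Definition Ppart (I : set (set nat)) (A : nat -> set nat) : Prop :=
  Phat I A /\ \bigcup_n A n = setT.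
Definition Mseq (I : set (set nat)) (E : nat -> set nat) : Prop :=
  (forall k, I (E k)) /\ (forall k, E k `<=` E k.+1).

(* "E is a witness family for b_s(I)", for one member E. *)
Definition bs_fails (I : set (set nat)) (A E : nat -> set nat) : Prop :=
  ~ I (\bigcup_n (A n.+1 `&` \bigcup_(i in [set i | (i <= n)%N]) E i)).

(* |K| < b_s(I): no family E ⊆ Phat_I of cardinality <= |K| is a witness,
   i.e. for every K-indexed family in Phat_I there is (A_n) in P_I defeating it. *)
Definition card_lt_bs (I : set (set nat)) (K : Type) : Prop :=
  forall E : K -> nat -> set nat, (forall a, Phat I (E a)) ->
  exists A, Ppart I A /\ forall a, ~ bs_fails I A (E a).

(* |K| < b_sigma(I). "E_n not subset of A_n for infinitely many n" negated:
   for all but finitely many n, E_n ⊆ A_n. *)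
Definition card_lt_bsigma (I : set (set nat)) (K : Type) : Prop :=
  forall E : K -> nat -> set nat, (forall a, Mseq I (E a)) ->
  exists A, Mseq I A /\ forall a, ~ infinite_set [set n | ~ (E a n `<=` A n)].

(* Main.v *)
Require Import Defs.
From HB Require Import structures.
From mathcomp Require Import all_boot all_order all_algebra.
From mathcomp Require Import all_classical all_reals all_analysis.
Import Order.TTheory GRing.Theory Num.Theory numFieldNormedType.Exports.
Local Open Scope classical_set_scope.
Local Open Scope ring_scope.
Local Notation truncn := Num.truncn.

Lemma fin_bound (S : set nat) : ~ infinite_set S ->
  exists N, forall m, S m -> (m < N)%N.
Proof.
move=> /contrapT /finite_seqP [s ->].
exists (\max_(i <- s) i).+1 => m /= ms; rewrite ltnS.
by apply: (@leq_bigmax_seq _ s xpredT (fun i : nat => i)).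
Qed.

Lemma ideal_finU (I : set (set nat)) (F : nat -> set nat) N : is_ideal I ->
  (forall i, I (F i)) -> I (\bigcup_(i in [set i | (i <= N)%N]) F i).
Proof.
move=> [IU [IS _]] IF; elim: N => [|N IH].
  apply: (IS (F 0%N)) (IF 0%N) => n [i /= i0 Fi].
  by move: i0 Fi; rewrite leqn0 => /eqP ->.
apply: (IS (\bigcup_(i in [set i | (i <= N)%N]) F i `|` F N.+1)); last exact: IU.
move=> n [i /= iN Fi]; move: iN; rewrite leq_eqVlt => /orP[/eqP <-|iN].
  by right.
by left; exists i.
Qed.

Theorem proposition4p5 (R : realType) (X : topologicalType)
  (I : set (set nat)) (K : Type) (Xa : K -> set X) (f : nat -> X -> R) :
  is_ideal I ->
  [set: X] = \bigcup_(a in [set: K]) Xa a ->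
  (forall n, continuous (f n)) ->
  (card_lt_bs I K -> (forall a, Iquasi_normal I f (Xa a)) ->
     Iquasi_normal I f [set: X]) /\
  (card_lt_bsigma I K -> (forall a, Isigma_uniform I f (Xa a)) ->
     Isigma_uniform I f [set: X]).
Proof.
move=> Iid cover _; have [IU [IS _]] := Iid; split.
- move=> hb hq; have [ep Hep] := choice hq.
  pose g a n := (truncn (ep a n)^-1).-1.
  pose E a i := [set n | g a n = i].
  have EP : forall a, Phat I (E a).
    move=> a; split.
    + move=> i; have [ep0 [epc _]] := Hep a.
      apply: (IS _ _ _ (epc (i.+2%:R)^-1 _)); last by rewrite invr_gt0 ltr0Sn.
      move=> n /= gi; rewrite ger0_norm; last exact: ltW.
      have h1 : (truncn (ep a n)^-1 <= i.+1)%N by rewrite -gi leqSpred.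
      move: h1; rewrite truncn_le_nat -invf_plt ?posrE ?ltr0Sn //; first exact: ltW.
    + move=> n m nm; apply/seteqP; split=> k //= [h1 h2]; apply: nm.
      by rewrite -h1 -h2.
  have [A [[[AI _] Acov] HA]] := hb E EP.
  have [j Hj] : {j : nat -> nat & forall n, A (j n) n}.
    apply: (@choice _ _ (fun n i => A i n)) => n; have : (\bigcup_i A i) n by rewrite Acov.
    by case=> i _ h; exists i.
  exists (fun n => ((j n).+1%:R)^-1); split; first by move=> n; rewrite invr_gt0 ltr0Sn.
  split.
  + move=> e e0.
    apply: (IS (\bigcup_(i in [set i | (i <= truncn e^-1)%N]) A i)); last exact: ideal_finU.
    move=> n /= he; exists (j n) => //=.
    rewrite truncn_ge_nat; last by rewrite invr_ge0 ltW.
    move: he; rewrite ger0_norm; last by rewrite invr_ge0.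
    rewrite invf_pge ?posrE ?ltr0Sn // => h.
    by apply: le_trans h; rewrite ler_nat.
  + move=> x _; have : [set: X] x by [].
    rewrite cover => -[a _ xa].
    apply: (IS ([set n | ep a n <= `|f n x|] `|` (A 0%N `|`
      \bigcup_n (A n.+1 `&` \bigcup_(i in [set i | (i <= n)%N]) E a i)))).
    * move=> n /= hn; case E0: (j n) => [|jn].
        by right; left; have := Hj n; rewrite E0.
      case: (pselect ((\bigcup_k (A k.+1 `&` \bigcup_(i in [set i | (i <= k)%N]) E a i)) n)) => [h|h].
        by right; right.
      left; rewrite E0 in hn; apply: le_trans hn.
      have hg : (jn < g a n)%N.
        rewrite ltnNge; apply/negP => hg; apply: h; exists jn => //; split.
          by have := Hj n; rewrite E0.
        by exists (g a n).
      have ep0 := (Hep a).1 n.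
      have h2 : (jn.+2 <= truncn (ep a n)^-1)%N.
        by move: hg; rewrite /g; case: (truncn _).
      move: h2; rewrite truncn_ge_nat; last by rewrite invr_ge0 ltW.
      by rewrite invf_pge ?posrE ?ltr0Sn.
    * apply: (IU); first exact: (Hep a).2.2 x xa.
      apply: (IU); first exact: AI.
      exact: contrapT (HA a).
- move=> hb hs; have [Y HY] := choice hs.
  pose E a m := [set n | exists k, (k <= m)%N /\
    exists2 x, Y a k x & ((m.+1)%:R)^-1 <= `|f n x|].
  have EM : forall a, Mseq I (E a).
    move=> a; split.
    + move=> m; apply: (IS (\bigcup_(k in [set k | (k <= m)%N])
        [set n | exists2 x, Y a k x & ((m.+1)%:R)^-1 <= `|f n x|])).
        by move=> n [k [km hx]]; exists k.
      apply: ideal_finU => // k; apply: (HY a).2.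
      by rewrite invr_gt0 ltr0Sn.
    + move=> m n [k [km [x Yx hx]]]; exists k; split; first exact: leqW.
      exists x => //; apply: le_trans hx.
      by rewrite lef_pV2 ?posrE ?ltr0Sn // ler_nat.
  have [A [[AI Amono] HA]] := hb E EM.
  pose Z j := [set x | forall m, (j <= m)%N -> forall n, ~ A m n ->
    `|f n x| < ((m.+1)%:R)^-1].
  exists Z; split.
  + apply/seteqP; split => x // _; have : [set: X] x by [].
    rewrite cover => -[a _ xa]; move: xa; rewrite (HY a).1 => -[k _ yk].
    have [N HN] := @fin_bound _ (HA a).
    exists (maxn N k) => //= m hm n nA.
    rewrite ltNge; apply/negP => hf; apply: nA.
    have EA : E a m `<=` A m.
      apply: contrapT => hE; have := HN m hE.
      by rewrite ltnNge (leq_trans (leq_maxl _ _) hm).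
    apply: EA; exists k; split; first exact: leq_trans (leq_maxr _ _) hm.
    by exists x.
  + move=> j e e0; pose m := maxn j (truncn e^-1).
    apply: (IS (A m)) (AI m) => n [x Zx hx]; apply: contrapT => nA.
    have := Zx m (leq_maxl _ _) n nA.
    have hm : ((m.+1)%:R)^-1 <= e.
      rewrite invf_ple ?posrE ?ltr0Sn //; apply: ltW.
      by rewrite -truncn_le_nat leq_maxr.
    by move=> /lt_le_trans /(_ (le_trans hm hx)); rewrite ltxx.
Qed.
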